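(* Let $T$ be a tree of order $n$ with $\mathrm{diss}(T)=\frac{2n}{3}$. Then for every vertex $u$ of $T$, there is a maximum dissociation set of $T$ (i.e., a dissociation set of cardinality $\mathrm{diss}(T)$) not containing $u$.
   Context: A set $D$ of vertices of a graph $G$ is a dissociation set if the induced subgraph $G[D]$ has maximum degree at most $1$; $\mathrm{diss}(G)$ is the maximum cardinality of a dissociation set of $G$. *)

(* Defs.v *)
From mathcomp Require Import all_boot.
Set Implicit Arguments. Unset Strict Implicit. Unset Printing Implicit Defensive.

Definition simple_graph (T : finType) (e : rel T) : Prop :=
  symmetric e /\ irreflexive e.

Definition nedges (T : finType) (e : rel T) : nat :=
  #|[set p : T * T | e p.1 p.2]| %/ 2.

Definition is_tree (T : finType) (e : rel T) : Prop :=
  [/\ simple_graph e, 0 < #|T|,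
      (forall x y : T, connect e x y) & nedges e = #|T| - 1].

Definition dissociation (T : finType) (e : rel T) (D : {set T}) : bool :=
  [forall x in D, #|[set y in D | e x y]| <= 1].

Definition diss (T : finType) (e : rel T) : nat :=
  \max_(D : {set T} | dissociation e D) #|D|.

(* Main.v *)
Require Import Defs.
From mathcomp Require Import all_boot zify.
Set Implicit Arguments. Unset Strict Implicit. Unset Printing Implicit Defensive.

Section G.
Variables (T : finType) (e : rel T).
Hypothesis esym : symmetric e.
Hypothesis eirr : irreflexive e.

Definition nbS (S : {set T}) x := [set y in S | e x y].
Definition PS (S : {set T}) := [set p : T * T | [&& p.1 \in S, p.2 \in S & e p.1 p.2]].

Lemma card_PS S : #|PS S| = \sum_(x in S) #|nbS S x|.
Proof.
rewrite /PS -sum1dep_card -(pair_big_dep (fun x => x \in S) (fun x y => (y \in S) && e x y) (fun _ _ => 1)) /=.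
apply: eq_bigr => x _; rewrite sum1dep_card; apply: eq_card => y; by rewrite !inE.
Qed.

Section Dist.
Variable S : {set T}.
Hypothesis conn : forall x y : T, connect e x y.
Variable s0 : T.
Hypothesis s0S : s0 \in S.

Definition reach x n := [exists p : n.-tuple T, path e x p && (last x p \in S)].
Lemma reach_ex x : exists n, reach x n.
Proof.
have /connectP [p pp lp] := conn x s0.
exists (size p); apply/existsP; exists (in_tuple p) => /=; by rewrite pp -lp s0S.
Qed.
Definition dist x := ex_minn (reach_ex x).

Lemma dist_step x : x \notin S -> exists y, e x y && (dist y < dist x).
Proof.
move=> xS; rewrite /dist; case: ex_minnP => m /existsP [p /andP [pp lp]] minm.
case: p pp lp => [[|y q] sz] /=; first by move=> _ lp; rewrite lp in xS.
move=> /andP [exy pq] lq; exists y; rewrite exy /=.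
case: ex_minnP => k _ mink.
have : reach y (size q) by apply/existsP; exists (in_tuple q); rewrite /= pq lq.
move/mink => H; move/eqP: sz => /= <-; by apply: leq_ltn_trans H _.
Qed.

Definition nxt x := odflt x [pick y | e x y && (dist y < dist x)].
Lemma nxtP x : x \notin S -> e x (nxt x) && (dist (nxt x) < dist x).
Proof.
move=> xS; rewrite /nxt; case: pickP => [y //|H].
have [y Hy] := dist_step xS; by rewrite H in Hy.
Qed.
End Dist.

Lemma tree_sparse : is_tree e -> forall S : {set T}, S != set0 -> #|PS S| < 2 * #|S|.
Proof.
case=> _ n0 conn ne S /set0Pn [s0 s0S].
set P := [set p : T * T | e p.1 p.2].
set A := [set (x, nxt conn s0S x) | x in ~: S].
set B := [set (nxt conn s0S x, x) | x in ~: S].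
have cA : #|A| = #|~: S| by apply: card_imset => x y [].
have cB : #|B| = #|~: S| by apply: card_imset => x y [].
have dAB : A :&: B = set0.
  apply/setP => -[a b]; rewrite !inE.
  apply/negP => /andP [/imsetP [x xS E1] /imsetP [y yS E2]].
  rewrite inE in xS; rewrite inE in yS.
  have /andP [_ h1] := nxtP conn s0S xS.
  have /andP [_ h2] := nxtP conn s0S yS.
  rewrite E1 in E2; case: E2 => ex ey.
  rewrite -ex in h2; rewrite ey in h1. have := ltn_trans h1 h2; by rewrite ltnn.
have dPS : PS S :&: (A :|: B) = set0.
  apply/setP => -[a b]; rewrite !inE /=.
  apply/negP => /andP [/and3P [aS bS _] /orP [] /imsetP [x xS [ex ey]]];
   rewrite inE in xS.
    by rewrite -ex aS in xS.
  by rewrite -ey bS in xS.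
have sub : PS S :|: (A :|: B) \subset P.
  apply/subsetP => -[a b]; rewrite !inE /= => /orP [/and3P [_ _ //]|/orP []]
    /imsetP [x xS [-> ->]]; rewrite inE in xS;
  have /andP [h _] := nxtP conn s0S xS => //; by rewrite esym.
have := subset_leq_card sub.
have := cardsUI A B; have := cardsUI (PS S) (A :|: B).
rewrite dAB dPS cards0 cA cB.
have := cardsCs S.
have : #|~: S| <= #|T| by apply: max_card.
have : #|S| <= #|T| by apply: max_card.
rewrite /nedges -/P in ne. lia.
Qed.

Definition deg (S : {set T}) x := #|nbS S x|.

Lemma dis2 (A : {set T}) : #|A| <= 2 -> dissociation e A.
Proof.
move=> hA; apply/forall_inP => x xA.
have sub : [set y in A | e x y] \subset A :\ x.
  apply/subsetP => y; rewrite !inE => /andP [yA exy]; rewrite yA andbT.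
  by apply/eqP => yx; rewrite yx eirr in exy.
have := subset_leq_card sub; have := cardsD1 x A; rewrite xA; lia.
Qed.

Lemma leaf_nb (S : {set T}) v p y : deg S v = 1 -> p \in S -> e v p -> y \in S -> e v y -> y = p.
Proof.
move/eqP/cards1P => [z hz] pS evp yS evy.
have : p \in nbS S v by rewrite inE pS.
have : y \in nbS S v by rewrite inE yS.
by rewrite hz !inE => /eqP -> /eqP ->.
Qed.

Definition closedS (S R A : {set T}) := forall a y, a \in A -> y \in S -> e a y -> y \in R.

Lemma ext (S R A D : {set T}) : R \subset S -> D \subset S :\: R -> A \subset R ->
  dissociation e D -> dissociation e A -> closedS S R A ->
  dissociation e (D :|: A) /\ #|D :|: A| = #|D| + #|A|.
Proof.
move=> RS DS AR dD dA cl; split; last first.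
  have : D :&: A = set0.
    apply/setP => y; rewrite !inE; apply/negP => /andP [yD yA].
    have := subsetP DS y yD; by rewrite inE (subsetP AR y yA).
  move=> h; have := cardsUI D A; rewrite h cards0; lia.
apply/forall_inP => x; rewrite inE => /orP [xD|xA].
  have -> : [set y in D :|: A | e x y] = [set y in D | e x y].
    apply/setP => y; rewrite !inE; case yD: (y \in D) => //=.
    apply/negP => /andP [yA exy].
    have xS : x \in S by have := subsetP DS x xD; rewrite inE => /andP [].
    have := cl y x yA xS; rewrite esym exy => /(_ isT) xR.
    by have := subsetP DS x xD; rewrite inE xR.
  by move/forall_inP: dD; apply.
have -> : [set y in D :|: A | e x y] = [set y in A | e x y].
  apply/setP => y; rewrite !inE; case yA: (y \in A); rewrite ?orbT //= orbF.
  apply/negP => /andP [yD exy].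
  have /setDP [yS yR] := subsetP DS y yD.
  by have := cl x y xA yS exy; rewrite (negbTE yR).
by move/forall_inP: dA; apply.
Qed.

Definition reducible (S : {set T}) := exists R A : {set T},
  [/\ R \subset S, R != set0, A \subset R, dissociation e A &
     2 * #|R| <= 3 * #|A| /\ closedS S R A].

Hypothesis sparse : forall S : {set T}, S != set0 -> \sum_(x in S) deg S x < 2 * #|S|.

Lemma red (S : {set T}) : S != set0 -> reducible S.
Proof.
move=> S0.
case: (boolP [exists x in S, deg S x == 0]) => [/exists_inP [x xS /eqP d0]|na].
  exists [set x], [set x]; split => //.
  - by rewrite sub1set.
  - by apply/set0Pn; exists x; rewrite inE.
  - by apply: dis2; rewrite cards1.
  split; first by rewrite cards1.
  move=> a y; rewrite inE => /eqP -> yS exy.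
  have : 0 < #|nbS S x| by apply/card_gt0P; exists y; rewrite inE yS.
  by rewrite /deg in d0; rewrite d0.
pose L p := [set v in nbS S p | deg S v == 1].
case: (boolP [exists p in S, 2 <= #|L p|]) => [/exists_inP [p pS hL]|nc].
  exists (p |: L p), (L p); split.
  - apply/subsetP => y; rewrite !inE => /orP [/eqP ->//|/andP [/andP [] //]].
  - by apply/set0Pn; exists p; rewrite !inE eqxx.
  - by apply/subsetP => y yL; rewrite inE yL orbT.
  - apply/forall_inP => x xL.
    have -> : [set y in L p | e x y] = set0; last by rewrite cards0.
    apply/setP => y; rewrite !inE; apply/negP => /andP [/andP [/andP [yS epy] _] exy].
    move: xL; rewrite !inE => /andP [/andP [xS epx] /eqP dx].
    have := leaf_nb dx pS; rewrite esym epx => /(_ y isT yS exy) yp.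
    by rewrite yp eirr in epy.
  split.
    have : p \notin L p by rewrite !inE eirr andbF.
    rewrite cardsU1 => ->; lia.
  move=> a y; rewrite !inE => /andP [/andP [aS epa] /eqP da] yS eay.
  have := leaf_nb da pS; rewrite esym epa => /(_ y isT yS eay) ->.
  by rewrite eqxx.
case: (boolP [exists v in S, [exists p in nbS S v, (deg S v == 1) && (deg S p <= 2)]])
   => [/exists_inP [v vS /exists_inP [p pN /andP [/eqP dv dp]]]|nb].
  move: (pN); rewrite inE => /andP [pS evp].
  exists (p |: nbS S p), [set v; p]; split.
  - apply/subsetP => y; rewrite !inE => /orP [/eqP ->//|/andP [] //].
  - by apply/set0Pn; exists p; rewrite !inE eqxx.
  - apply/subsetP => y; rewrite !inE => /orP [/eqP ->|/eqP ->]; last by rewrite eqxx.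
    by rewrite vS esym evp orbT.
  - by apply: dis2; rewrite cards2; case: (_ != _).
  split.
    have vp : v != p by apply/eqP => vp; rewrite vp eirr in evp.
    rewrite cards2 vp; have := cardsU1 p (nbS S p); rewrite /deg in dp.
    case: (p \notin nbS S p) => /=; lia.
  move=> a y; rewrite !inE => /orP [/eqP ->|/eqP ->] yS eay.
    by rewrite (leaf_nb dv pS evp yS eay) eqxx.
  by rewrite yS eay orbT.
exfalso.
pose Lv := [set v in S | deg S v == 1].
pose S' := S :\: Lv.
have nbS' x : nbS S' x = nbS S x :\: Lv.
  by apply/setP => y; rewrite !inE; case: (y \in S); rewrite ?andbF ?andbT //=; case: (e x y); rewrite ?andbF.
have key x : x \in S' -> 2 <= deg S' x.
  rewrite inE => /andP [xL xS].
  have dx : 2 <= deg S x.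
    move: xL; rewrite inE xS /= => dx1.
    case: (ltnP 1 (deg S x)) => //; rewrite leq_eqVlt ltnS leqn0 (negbTE dx1) /=.
    move=> d0; move/exists_inP: na; case; exists x => //.
  rewrite /deg nbS'.
  have := cardsID Lv (nbS S x).
  case: (boolP (nbS S x :&: Lv == set0)) => [/eqP -> | /set0Pn [v]].
    rewrite cards0 /deg in dx *; lia.
  rewrite !inE => /andP [/andP [vS exv] /andP [_ dv]].
  have hb : 2 < deg S x.
    rewrite ltnNge; apply/negP => h; move/existsP: nb; apply; exists v.
    rewrite vS /=; apply/exists_inP; exists x; first by rewrite inE xS esym exv.
    by rewrite dv h.
  have hc : #|nbS S x :&: Lv| <= 1.
    have -> : nbS S x :&: Lv = L x by apply/setP => y; rewrite !inE; case: (y \in S); rewrite ?andbF //= andbC.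
    rewrite leqNgt; apply/negP => h; move/exists_inP: nc; apply; exists x => //.
  rewrite /deg in hb; lia.
have S'0 : S' != set0.
  case/set0Pn: S0 => s sS.
  case: (boolP (s \in Lv)) => [|sL]; last by apply/set0Pn; exists s; rewrite inE sL sS.
  rewrite inE sS /= => /eqP ds.
  have : #|nbS S s| == 1 by rewrite -/(deg S s) ds.
  case/cards1P => p hp.
  have : p \in nbS S s by rewrite hp inE.
  rewrite inE => /andP [pS esp].
  apply/set0Pn; exists p; rewrite !inE pS andbT.
  apply/negP => /eqP dp; move/existsP: nb; apply; exists s.
  rewrite sS /=; apply/exists_inP; exists p; first by rewrite inE pS esp.
  by rewrite ds dp.
have := sparse S'0.
have : \sum_(x in S') 2 <= \sum_(x in S') deg S' x by apply: leq_sum => x /key.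
rewrite sum_nat_const; lia.
Qed.

Lemma forest_bound n (S : {set T}) : #|S| <= n ->
  exists D : {set T}, [/\ D \subset S, dissociation e D & 2 * #|S| <= 3 * #|D|].
Proof.
elim: n S => [|n IH] S hS.
  exists set0; split; rewrite ?sub0set ?cards0 //; last by move: hS; rewrite leqn0 => /eqP ->.
  by apply: dis2; rewrite cards0.
case: (boolP (S == set0)) => [/eqP ->|S0].
  exists set0; split; rewrite ?sub0set ?cards0 //; by apply: dis2; rewrite cards0.
have [R [A [RS R0 AR dA [cRA cl]]]] := red S0.
have hSR : #|S :\: R| <= n.
  have := cardsID R S; have -> : S :&: R = R by apply/setIidPr.
  move: R0 => /set0Pn [r rR]; have : 0 < #|R| by apply/card_gt0P; exists r.
  lia.
have [D [DS dD cD]] := IH _ hSR.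
have [dDA cDA] := ext RS DS AR dD dA cl.
exists (D :|: A); split => //.
  apply/subsetP => y; rewrite inE => /orP [/(subsetP DS)|/(subsetP AR)/(subsetP RS)] //.
  by rewrite inE => /andP [].
have := cardsID R S; have -> : S :&: R = R by apply/setIidPr.
lia.
Qed.
End G.

Theorem lemma2 (T : finType) (e : rel T) :
  is_tree e -> 3 * diss e = 2 * #|T| ->
  forall u : T, exists D : {set T},
    [/\ dissociation e D, #|D| = diss e & u \notin D].
Proof.
move=> tr hd u.
have [[esym eirr] _ _ _] := tr.
have sp : forall S : {set T}, S != set0 -> \sum_(x in S) deg e S x < 2 * #|S|.
  move=> S S0; rewrite /deg -card_PS; exact: tree_sparse.
have [D [DS dD cD]] := forest_bound esym eirr sp (leqnn #|[set~ u]|).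
have hle : #|D| <= diss e by rewrite /diss; apply: (leq_bigmax_cond (P := dissociation e)).
exists D; split => //; last by have := subsetP DS u; rewrite !inE eqxx; case: (u \in D) => // /(_ isT).
move: cD; rewrite cardsC1; lia.
Qed.
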